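(* Let $(P,w)$ be a naturally labeled poset with $n$ elements and let $\alpha$ be a composition of $n$. Then $$\sum_{\sigma\in\mathcal L_\alpha(P,w)}(-1)^{|\mathrm{Des}(\sigma)\setminus S_\alpha|}=|\mathcal L^*_\alpha(P,w)|.$$ In particular the left-hand side is nonnegative.
   Context: A composition $\alpha=(\alpha_1,\dots,\alpha_\ell)$ of $n$ is a sequence of positive integers summing to $n$; $S_\alpha=\{\alpha_1,\alpha_1+\alpha_2,\dots,\alpha_1+\dots+\alpha_{\ell-1}\}$; blocks $B_i(\alpha)=\{\alpha_1+\dots+\alpha_{i-1}+1,\dots,\alpha_1+\dots+\alpha_i\}$. A permutation $\sigma\in\mathfrak S_n$ (one-line notation) is $\alpha$-unimodal if for each $i$, writing $B_i(\alpha)=[a,b]$, there is $k\in[a,b]$ with $\sigma_a>\dots>\sigma_k<\dots<\sigma_b$. $\mathrm{Des}(\sigma)=\{i\in[n-1]:\sigma_i>\sigma_{i+1}\}$. A labeled poset $(P,w)$ is a finite poset $P$ with a bijection $w:P\to[n]$; it is naturally labeled if $x<_Py$ implies $w(x)<w(y)$. $\mathcal L(P,w)=\{\sigma\in\mathfrak S_n: \sigma^{-1}(w(x))<\sigma^{-1}(w(y))\text{ whenever }x<_Py\}$. $\mathcal L_\alpha(P,w)$ is the set of $\alpha$-unimodal $\sigma\in\mathcal L(P,w)$. For $\sigma\in\mathfrak S_n$ let $P_i^\alpha(\sigma)=\{w^{-1}(\sigma_j):j\in B_i(\alpha)\}$ with the induced order. $\mathcal L^*_\alpha(P,w)$ is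 the set of $\sigma\in\mathcal L_\alpha(P,w)$ such that $P_i^\alpha(\sigma)$ has a unique minimal element for every $i$. *)

(* Defs.v *)
From HB Require Import structures.
From mathcomp Require Import all_boot all_order all_algebra all_fingroup.
Set Implicit Arguments. Unset Strict Implicit. Unset Printing Implicit Defensive.

(* Conventions: positions in one-line notation are 1-indexed (1..n) as in the
   paper; labels are elements of 'I_n, i.e. [n] is represented by {0,...,n-1}
   (a harmless shift). A permutation s : 'S_n has one-line entry
   sigma_j = val (s (j-1)) for 1 <= j <= n. *)

Section Defs.
Variable n : nat.

Definition oneline (s : 'S_n) (j : nat) : nat :=
  nth 0 [seq val (s i) | i <- enum 'I_n] j.-1.

Definition is_composition (al : seq nat) : bool :=
  all (fun a => 0 < a) al && (sumn al == n).

Definition S_alpha (al : seq nat) : seq nat :=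
  [seq sumn (take i al) | i <- iota 1 (size al).-1].

(* Block B_{i+1}(alpha) = [blk_lo i, blk_hi i] for 0 <= i < size al. *)
Definition blk_lo (al : seq nat) (i : nat) : nat := (sumn (take i al)).+1.
Definition blk_hi (al : seq nat) (i : nat) : nat := sumn (take i.+1 al).
Definition in_block (al : seq nat) (i j : nat) : bool :=
  (blk_lo al i <= j) && (j <= blk_hi al i).

Definition Des (s : 'S_n) : seq nat :=
  [seq i <- iota 1 n.-1 | oneline s i.+1 < oneline s i].

Definition des_out (al : seq nat) (s : 'S_n) : nat :=
  count (fun i => i \notin S_alpha al) (Des s).

Definition unimodal (al : seq nat) (s : 'S_n) : bool :=
  all (fun i =>
    [exists k : 'I_n.+1,
      (blk_lo al i <= k <= blk_hi al i) &&
      [forall j : 'I_n.+1,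
        ((blk_lo al i <= j < k) ==> (oneline s j.+1 < oneline s j)) &&
        ((k <= j < blk_hi al i) ==> (oneline s j < oneline s j.+1))]])
    (iota 0 (size al)).

Variables (d : Order.disp_t) (T : finPOrderType d) (w : T -> 'I_n).

Definition natural_labeling : Prop :=
  forall x y : T, (x < y)%O -> w x < w y.

Definition linext (s : 'S_n) : bool :=
  [forall x : T, forall y : T, (x < y)%O ==> (val ((s^-1)%g (w x)) < val ((s^-1)%g (w y)))].

Definition inLalpha (al : seq nat) (s : 'S_n) : bool := linext s && unimodal al s.

Definition Pblock (al : seq nat) (s : 'S_n) (i : nat) : {set T} :=
  [set x : T | [exists j : 'I_n, in_block al i j.+1 && (s j == w x)]].

Definition minimal_in (A : {set T}) (x : T) : bool :=
  (x \in A) && [forall z : T, (z \in A) ==> ~~ (z < x)%O].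

Definition unique_min (A : {set T}) : bool :=
  [exists x : T, minimal_in A x && [forall y : T, minimal_in A y ==> (y == x)]].

Definition inLstar (al : seq nat) (s : 'S_n) : bool :=
  inLalpha al s && all (fun i => unique_min (Pblock al s i)) (iota 0 (size al)).

End Defs.

(* Main.v *)
Require Import Defs.
From HB Require Import structures.
From mathcomp Require Import all_boot all_order all_algebra all_fingroup.
From mathcomp Require Import zify.
Set Implicit Arguments. Unset Strict Implicit. Unset Printing Implicit Defensive.


Definition ulistk (c : seq nat) k :=
  (k < size c) && sorted gtn (take k.+1 c) && sorted ltn (drop k c).

Lemma gtn_trans : transitive gtn.
Proof. by move=> a b c /= h1 h2; exact: ltn_trans h2 h1. Qed.

Lemma ulist_min c k : ulistk c k -> forall r, r < size c -> nth 0 c k <= nth 0 c r.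
Proof.
case/andP=> [/andP[hk h1] h2] r hr.
case: (ltngtP r k) => [hrk | hkr | ->]; last by [].
- have := sorted_ltn_nth gtn_trans 0 h1.
  have hs : size (take k.+1 c) = k.+1 by rewrite size_takel.
  move=> /(_ r k); rewrite !inE hs ltnS (ltnW hrk) leqnn => /(_ isT isT hrk) /=.
  by rewrite !nth_take ?ltnS ?(ltnW hrk) // => /ltnW.
- have := sorted_ltn_nth ltn_trans 0 h2.
  have hs : size (drop k c) = size c - k by rewrite size_drop.
  move=> /(_ 0 (r - k)); rewrite !inE hs subn_gt0 hk ltn_sub2r //.
  rewrite subn_gt0 => /(_ isT isT hkr).
  by rewrite !nth_drop addn0 subnKC ?(ltnW hkr) // => /ltnW.
Qed.

Lemma ulist_des c k : ulistk c k ->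
  count (fun r => nth 0 c r.+1 < nth 0 c r) (iota 0 (size c).-1) = k.
Proof.
case/andP=> [/andP[hk h1] h2].
have -> : (size c).-1 = k + ((size c).-1 - k) by rewrite subnKC // -ltnS prednK // (leq_ltn_trans _ hk).
rewrite iotaD count_cat add0n.
rewrite (eq_in_count (a2 := predT)) ?count_predT ?size_iota; last first.
  move=> r; rewrite mem_iota add0n => /andP[_ hr] /=.
  move/sortedP: h1 => /(_ 0 r); rewrite size_takel // ltnS => /(_ hr).
  by rewrite !nth_take // ltnS // (ltnW hr).
rewrite (eq_in_count (a2 := pred0)) ?count_pred0 ?addn0 //.
move=> r; rewrite mem_iota => /andP[hkr hr] /=.
move/sortedP: h2 => /(_ 0 (r - k)).
rewrite size_drop.
have hr1 : r.+1 < size c.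
  move: hr; rewrite subnKC; last by rewrite -ltnS prednK // (leq_ltn_trans _ hk).
  by move=> hr; rewrite -(prednK (leq_ltn_trans (leq0n _) hk)) ltnS.
rewrite -subSn // ltn_sub2r // => /(_ isT).
by rewrite !nth_drop !subnKC // ?(leqW hkr) // ltnNge => /ltnW ->.
Qed.


Section Local.
Variable n : nat.
Variable prec : rel 'I_n.
Hypothesis hprec : forall a c, prec a c -> a < c.

Definition ole : rel 'I_n := fun a c => (a <= c)%N.
Definition canon (X : pred 'I_n) (S : seq 'I_n) :=
  rev [seq x <- S | X x] ++ [seq x <- S | ~~ X x].
Definition mn (b : seq 'I_n) a := (a \in b) && all (fun c => ~~ prec c a) b.
Definition extb (b : seq 'I_n) :=
  forall a c, a \in b -> c \in b -> prec a c -> index a b < index c b.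

Lemma ole_total : total ole. Proof. by move=> a c; exact: leq_total. Qed.
Lemma ole_trans : transitive ole. Proof. by move=> a c e; exact: leq_trans. Qed.
Lemma ole_anti : antisymmetric ole.
Proof. by move=> a c h; apply: val_inj; apply/eqP; rewrite eqn_leq. Qed.

Lemma sort_ltn (b : seq 'I_n) : uniq b -> sorted ltn (map val (sort ole b)).
Proof.
move=> ub; rewrite ltn_sorted_uniq_leq map_inj_uniq ?sort_uniq //; last exact: val_inj.
by rewrite ub /= sorted_map; exact: (sort_sorted ole_total).
Qed.

Lemma ulist_head (b : seq 'I_n) k x0 : uniq b -> ulistk (map val b) k ->
  sort ole b = nth x0 b k :: behead (sort ole b).
Proof.
move=> ub hu; have hk : k < size b by case/andP: hu => /andP[]; rewrite size_map.
case E: (sort ole b) => [|h t].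
  by move: (size_sort ole b); rewrite E /= => h0; move: hk; rewrite -h0.
congr (_ :: _); apply: ole_anti; apply/andP; split.
- have hs := sort_sorted ole_total b; rewrite E /= in hs.
  have hm : nth x0 b k \in h :: t by rewrite -E mem_sort mem_nth.
  rewrite inE in hm; case/orP: hm => [/eqP -> | hm]; first exact: leqnn.
  rewrite (path_sortedE ole_trans) in hs; case/andP: hs => /allP /(_ _ hm) //.
- have hh : h \in b by rewrite -(mem_sort ole) E mem_head.
  have := ulist_min hu (r := index h b); rewrite size_map index_mem hh => /(_ isT).
  by rewrite !(nth_map x0) ?index_mem // nth_index.
Qed.

Lemma filter_nil (T : Type) (a : pred T) s : all (fun x => ~~ a x) s -> filter a s = [::].
Proof. by elim: s => //= x s IH /andP[/negbTE -> /IH]. Qed.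

Lemma canon_form b k : uniq b -> ulistk (map val b) k ->
  b = canon (mem (take k b)) (sort ole b).
Proof.
move=> ub /andP[/andP[hk h1] h2].
set D := take k b; set R := drop k b.
have hb : b = D ++ R by rewrite cat_take_drop.
have uDR : uniq (D ++ R) by rewrite -hb.
move: (uDR); rewrite cat_uniq => /and3P[uD hDR uR].
have fD : [seq x <- b | x \in D] = D.
  rewrite {1}hb filter_cat (all_filterP (allss D)).
  rewrite filter_nil ?cats0 //; apply/allP=> x xR /=; apply/negP=> xD.
  by move/hasP: hDR; apply; exists x.
have fR : [seq x <- b | ~~ (x \in D)] = R.
  rewrite {1}hb filter_cat filter_nil; last by apply/allP=> x xD /=; rewrite negbK.
  apply/all_filterP/allP=> x xR /=; apply/negP=> xD.
  by move/hasP: hDR; apply; exists x.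
have sR : sorted ole R.
  move: h2; rewrite -map_drop sorted_map => h2.
  by apply: sub_sorted h2 => a c /=; exact: ltnW.
have sD : sorted ole (rev D).
  rewrite rev_sorted.
  have : sorted gtn (take k (take k.+1 (map val b))) by exact: take_sorted.
  rewrite take_takel // -map_take sorted_map => h.
  by apply: sub_sorted h => a c /=; exact: ltnW.
rewrite /canon !filter_sort ?fD ?fR; [|exact: ole_total|exact: ole_trans|exact: ole_total|exact: ole_trans].
rewrite (sorted_sort ole_trans sR).
have -> : sort ole D = rev D.
  apply: (sorted_eq ole_trans ole_anti); first exact: (sort_sorted ole_total).
    exact: sD.
  by rewrite perm_sort perm_sym perm_rev.
by rewrite revK.
Qed.

Lemma canon_perm X S : perm_eq (canon X S) S.
Proof.
rewrite /canon; apply: (@perm_trans _ ([seq x <- S | X x] ++ [seq x <- S | predC X x])).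
  by apply: perm_cat => //; rewrite perm_rev.
exact: (permEl (perm_filterC X S)).
Qed.

Lemma canon_ulist S X m S' : S = m :: S' -> uniq S -> sorted ole S -> ~~ X m ->
  ulistk (map val (canon X S)) (count X S).
Proof.
move=> -> uS sS hXm.
have sv : sorted ltn (map val (m :: S')).
  by rewrite ltn_sorted_uniq_leq (map_inj_uniq val_inj) uS sorted_map.
move: (sv); rewrite /= (path_sortedE ltn_trans) => /andP[allm sv'].
rewrite /canon /= (negbTE hXm) /= -size_filter map_cat map_rev /=.
set A := map val [seq x <- S' | X x]; set B := map val [seq x <- S' | ~~ X x].
have sA : sorted ltn A.
  by apply: (subseq_sorted ltn_trans _ sv'); apply: map_subseq; exact: filter_subseq.
have sB : sorted ltn B.
  by apply: (subseq_sorted ltn_trans _ sv'); apply: map_subseq; exact: filter_subseq.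
have aA : all (ltn (val m)) A.
  apply/allP=> x /mapP[y]; rewrite mem_filter => /andP[_ yS] ->.
  by move/allP: allm; apply; exact: map_f.
have aB : all (ltn (val m)) B.
  apply/allP=> x /mapP[y]; rewrite mem_filter => /andP[_ yS] ->.
  by move/allP: allm; apply; exact: map_f.
have hsA : size [seq x <- S' | X x] = size A by rewrite size_map.
rewrite hsA /ulistk size_cat size_rev /= addnS ltnS leq_addr /=.
rewrite add0n take_cat size_rev ltnNge leqnSn /= subSnn /= take0 drop_cat size_rev ltnn subnn drop0.
apply/andP; split; last by rewrite /= path_min_sorted.
have -> : rev A ++ [:: val m] = rev (val m :: A) by rewrite rev_cons cats1.
rewrite rev_sorted; have : sorted ltn (val m :: A) by rewrite /= path_min_sorted.
by [].
Qed.

Lemma sorted_index (s : seq 'I_n) a c : sorted ltn (map val s) -> a \in s -> c \in s ->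
  a < c -> index a s < index c s.
Proof.
move=> ss aS cS hac; rewrite ltnNge leq_eqVlt; apply/negP => /orP[/eqP e | h].
  have : nth a s (index c s) = nth a s (index a s) by rewrite e.
  by rewrite !nth_index // => ec; move: hac; rewrite ec ltnn.
have := sorted_ltn_nth ltn_trans 0 ss; move=> /(_ (index c s) (index a s)).
rewrite !inE size_map !index_mem aS cS => /(_ isT isT h).
rewrite !(nth_map a) ?index_mem // !nth_index // => /= hca.
by move: (ltn_trans hac hca); rewrite ltnn.
Qed.

Lemma valley_min b k : uniq b -> ulistk (map val b) k -> extb b ->
  forall a, a \in take k b -> mn b a.
Proof.
move=> ub hu hext a aD.
have ab : a \in b by rewrite -(cat_take_drop k b) mem_cat aD.
have ia : index a b < k.
  rewrite -{1}(cat_take_drop k b) index_cat aD.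
  by apply: (leq_trans (n := size (take k b))); rewrite ?index_mem // size_take_min geq_minl.
rewrite /mn ab /=; apply/allP=> c cb; apply/negP=> pca.
have hca := hprec pca.
have ic := hext _ _ cb ab pca.
case/andP: hu => [/andP[hk h1] _].
have := sorted_ltn_nth gtn_trans 0 h1; move=> /(_ (index c b) (index a b)).
have hs : size (take k.+1 (map val b)) = k.+1 by rewrite size_takel.
rewrite !inE hs !ltnS (ltnW ia) (ltnW (ltn_trans ic ia)) => /(_ isT isT ic) /=.
rewrite !nth_take ?ltnS ?(ltnW ia) ?(ltnW (ltn_trans ic ia)) //.
rewrite !(nth_map a) ?index_mem // !nth_index // => hac.
by move: (ltn_trans hca hac); rewrite ltnn.
Qed.

Lemma canon_ext b (X : pred 'I_n) : uniq b -> (forall a, a \in b -> X a -> mn b a) ->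
  extb (canon X (sort ole b)).
Proof.
move=> ub hX a c; rewrite !(perm_mem (canon_perm X _)) !mem_sort => ab cb pac.
have nXc : ~~ X c.
  apply/negP=> Xc; case/andP: (hX c cb Xc) => _ /allP /(_ a ab); by rewrite pac.
have sv := sort_ltn ub.
have cF2 : c \in [seq x <- sort ole b | ~~ X x] by rewrite mem_filter nXc mem_sort.
have cF1 : c \notin rev [seq x <- sort ole b | X x] by rewrite mem_rev mem_filter negb_and nXc.
rewrite /canon !index_cat (negbTE cF1).
case Xa : (X a).
  have aF1 : a \in rev [seq x <- sort ole b | X x] by rewrite mem_rev mem_filter Xa mem_sort.
  by rewrite aF1; apply: (leq_trans (n := size (rev [seq x <- sort ole b | X x]))); rewrite ?leq_addr // index_mem.
have aF1 : a \notin rev [seq x <- sort ole b | X x] by rewrite mem_rev mem_filter Xa.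
rewrite (negbTE aF1) ltn_add2l; apply: sorted_index => //.
- by apply: (subseq_sorted ltn_trans _ sv); apply: map_subseq; exact: filter_subseq.
- by rewrite mem_filter Xa mem_sort.
- exact: hprec.
Qed.
End Local.


Section Arith.
Variable n : nat.
Variable al : seq nat.
Hypothesis comp : is_composition n al.

Definition lo i := sumn (take i al).
Definition bl i := nth 0 al i.

Lemma bl_pos i : i < size al -> 0 < bl i.
Proof. by case/andP: comp => /allP hp _ hi; apply: hp; exact: mem_nth. Qed.

Lemma sum_al : sumn al = n.
Proof. by case/andP: comp => _ /eqP. Qed.

Lemma lo_step i : i < size al -> lo i.+1 = lo i + bl i.
Proof. by move=> hi; rewrite /lo (take_nth 0 hi) -cats1 sumn_cat /= addn0. Qed.

Lemma lo_mono i j : i <= j -> lo i <= lo j.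
Proof.
move=> hij; rewrite /lo -(cat_take_drop i (take j al)) take_takel // sumn_cat.
exact: leq_addr.
Qed.

Lemma lo_over i : size al <= i -> lo i = n.
Proof. by move=> h; rewrite /lo take_oversize // sum_al. Qed.

Lemma lo_strict i j : i < j -> i < size al -> lo i < lo j.
Proof.
move=> hij hi; apply: (leq_trans _ (lo_mono hij)).
by rewrite lo_step // -addn1 leq_add2l bl_pos.
Qed.

Lemma blk_end i : i < size al -> lo i + bl i <= n.
Proof. by move=> hi; rewrite -lo_step // -(lo_over (leqnn _)); apply: lo_mono. Qed.

Lemma inS p : p \in S_alpha al -> exists2 j, 0 < j < size al & p = lo j.
Proof.
rewrite /S_alpha => /mapP[j]; rewrite mem_iota => /andP[h1 h2] ->; exists j => //.
move: h1 h2; case: (size al) => [|m] /=; lia.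
Qed.

Lemma loS j : 0 < j < size al -> lo j \in S_alpha al.
Proof.
move=> /andP[h1 h2]; apply/mapP; exists j => //; rewrite mem_iota.
move: h1 h2; case: (size al) => [|m] /=; lia.
Qed.

Lemma internal_notS i p : i < size al -> lo i < p < lo i + bl i -> p \notin S_alpha al.
Proof.
move=> hi /andP[h1 h2]; apply/negP=> /inS[j /andP[_ hj] ej].
case: (leqP j i) => hji.
  by move: h1; rewrite ej ltnNge lo_mono.
by move: h2; rewrite ej -lo_step // ltnNge lo_mono.
Qed.

Lemma find_block p : 0 < p < n -> p \notin S_alpha al ->
  exists2 i, i < size al & lo i < p < lo i + bl i.
Proof.
move=> /andP[hp0 hpn] hS.
have ex : exists j, p < lo j by exists (size al); rewrite lo_over.
case: (ex_minnP ex) => j hj hmin.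
case: j hj hmin => [|i] hj hmin; first by move: hj; rewrite /lo take0.
have hi : i < size al.
  rewrite ltnNge; apply/negP=> hs; move: (hmin i); rewrite lo_over // hpn => /(_ isT).
  by rewrite ltnn.
exists i => //; rewrite -lo_step // hj andbT.
have hle : lo i <= p by rewrite leqNgt; apply/negP=> /hmin; rewrite ltnn.
rewrite ltn_neqAle hle andbT; apply/eqP=> e.
case: i hi hj hmin hle e => [|i] hi hj hmin hle e.
  by move: hp0; rewrite -e /lo take0.
by move: hS; rewrite -e loS.
Qed.
End Arith.


Section Splice.
Variable X : Type.
Definition splice (L : seq X) l a (b : seq X) := take l L ++ b ++ drop (l + a) L.

Variables (L b : seq X) (l a : nat).
Hypothesis hla : l + a <= size L.
Hypothesis hb : size b = a.

Lemma size_splice : size (splice L l a b) = size L.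
Proof. rewrite /splice !size_cat size_takel ?size_drop ?hb; lia. Qed.

Lemma nth_splice_out x q : ~~ (l <= q < l + a) -> nth x (splice L l a b) q = nth x L q.
Proof.
move=> hq; rewrite /splice nth_cat size_takel; last lia.
case: ltnP => h1; first by rewrite nth_take.
rewrite nth_cat hb; case: ltnP => h2; first lia.
rewrite nth_drop; congr nth; lia.
Qed.

Lemma nth_splice_in x r : r < a -> nth x (splice L l a b) (l + r) = nth x b r.
Proof.
move=> hr; rewrite /splice nth_cat size_takel; last lia.
rewrite ltnNge leq_addr /= addKn nth_cat hb hr //.
Qed.

Lemma block_splice : take a (drop l (splice L l a b)) = b.
Proof.
rewrite /splice drop_cat size_takel; last lia.
rewrite ltnn subnn drop0 take_cat hb ltnn subnn take0 cats0 //.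
Qed.

Lemma splice_other (x0 : X) l2 a2 : l2 + a2 <= size L -> (l2 + a2 <= l) || (l + a <= l2) ->
  take a2 (drop l2 (splice L l a b)) = take a2 (drop l2 L).
Proof.
move=> h2 hd; apply: (@eq_from_nth _ x0).
  by rewrite !size_takel ?size_drop ?size_splice //; lia.
move=> r; rewrite size_takel ?size_drop ?size_splice => [hr|]; last lia.
rewrite !nth_take; [|lia|lia]; rewrite !nth_drop nth_splice_out //; lia.
Qed.
End Splice.

Lemma splice_id (X : Type) (L : seq X) l a :
  splice L l a (take a (drop l L)) = L.
Proof.
by rewrite /splice addnC -drop_drop !cat_take_drop.
Qed.


Lemma nth_blockv (V : seq nat) l a r : l + a <= size V -> r < a ->
  nth 0 (take a (drop l V)) r = nth 0 V (l + r).
Proof. by move=> h hr; rewrite nth_take // nth_drop. Qed.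

Lemma size_blockv (X : Type) (V : seq X) l a : l + a <= size V -> size (take a (drop l V)) = a.
Proof. by move=> h; rewrite size_takel // size_drop; lia. Qed.

Lemma uni_block n (V : seq nat) l a : size V = n -> l + a <= n -> 0 < a ->
 [exists K : 'I_n.+1, (l < K <= l + a) && [forall j : 'I_n.+1,
    ((l < j < K) ==> (nth 0 V j < nth 0 V j.-1)) &&
    ((K <= j < l + a) ==> (nth 0 V j.-1 < nth 0 V j))]]
 = [exists k : 'I_n.+1, ulistk (take a (drop l V)) k].
Proof.
move=> hV hla ha.
have hla' : l + a <= size V by rewrite hV.
have sc := size_blockv hla'.
have nc := nth_blockv hla'.
apply/existsP/existsP.
- case=> K /andP[/andP[hK1 hK2] /forallP hj].
  exists (inord (K - l.+1)); rewrite /ulistk inordK; last lia.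
  rewrite sc; apply/andP; split; first (apply/andP; split); first lia.
  + apply/(sortedP 0) => r; rewrite size_takel ?sc; last lia.
    move=> hr; rewrite !nth_take; try lia; rewrite !nth_drop.
    have := hj (inord (l + r.+1)); rewrite inordK; last lia.
    case/andP=> h _; move: h; have -> : (l < l + r.+1 < K) = true by apply/idP; lia.
    by rewrite addnS /=.
  + apply/(sortedP 0) => r; rewrite size_drop sc => hr.
    rewrite !nth_drop !nc; try lia.
    have := hj (inord (K + r)); rewrite inordK; last lia.
    case/andP=> _; have -> : (K <= K + r < l + a) = true by apply/idP; lia.
    have -> : (K + r).-1 = l + (K - l.+1 + r) by lia.
    by have -> : K + r = l + (K - l.+1 + r.+1) by lia.
- case=> k /andP[/andP[hk h1] h2]; rewrite sc in hk.
  exists (inord (l + k).+1); rewrite inordK; last lia.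
  apply/andP; split; first (apply/andP; split); [lia|lia|].
  apply/forallP=> j; apply/andP; split; apply/implyP=> hj.
  + move/(sortedP 0): h1 => /(_ (j - l.+1)); rewrite size_takel ?sc; last lia.
    move=> h; have := h ltac:(lia); rewrite !nth_take; try lia; rewrite !nth_drop.
    have -> : l + (j - l.+1) = j.-1 by lia.
    by have -> : l + (j - l.+1).+1 = j by lia.
  + move/(sortedP 0): h2 => /(_ (j - (l + k).+1)); rewrite size_drop sc.
    move=> h; have := h ltac:(lia); rewrite !nth_drop !nc; try lia.
    have -> : l + (k + (j - (l + k).+1)) = j.-1 by lia.
    by have -> : l + (k + (j - (l + k).+1).+1) = j by lia.
Qed.


Lemma index_swap (X : eqType) (p c c' q : seq X) a z : c =i c' -> size c = size c' ->
  (a \in c -> z \in c -> index a c' < index z c') ->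
  index a (p ++ c ++ q) < index z (p ++ c ++ q) ->
  index a (p ++ c' ++ q) < index z (p ++ c' ++ q).
Proof.
move=> ec sc hin; rewrite !index_cat -!ec.
have bc x : x \in c -> index x c < size c by rewrite index_mem.
have bc' x : x \in c -> index x c' < size c by rewrite sc index_mem ec.
have bp x : x \in p -> index x p < size p by rewrite index_mem.
move: (bp a) (bp z) (bc a) (bc z) (bc' a) (bc' z) hin.
case: (a \in p); case: (z \in p); case: (a \in c); case: (z \in c) => /=; rewrite -?sc;
  intros; repeat match goal with H : is_true true -> _ |- _ => specialize (H isT) end; lia.
Qed.

Lemma splice_splice (X : Type) (L b1 b2 : seq X) l a : l + a <= size L -> size b1 = a ->
  splice (splice L l a b1) l a b2 = splice L l a b2.
Proof.
move=> h hb; rewrite /splice take_size_cat ?size_takel //; try lia.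
by rewrite (catA (take l L) b1) drop_size_cat // size_cat size_takel ?hb //; lia.
Qed.

Lemma map_splice (X Y : Type) (f : X -> Y) L l a b :
  map f (splice L l a b) = splice (map f L) l a (map f b).
Proof. by rewrite /splice !map_cat map_take map_drop. Qed.

Lemma perm_splice (X : eqType) (L b : seq X) l a : perm_eq b (take a (drop l L)) ->
  perm_eq (splice L l a b) L.
Proof.
move=> hb; rewrite -{2}(splice_id L l a) /splice.
by rewrite perm_cat2l perm_cat2r.
Qed.

Lemma count_split (X : Type) (f q : pred X) s :
  count f s = count (fun x => f x && q x) s + count (fun x => f x && ~~ q x) s.
Proof. by elim: s => //= x s ->; case: (f x); case: (q x) => /=; lia. Qed.

Lemma count_xor (X : eqType) (p : pred X) t s : uniq s -> t \in s ->
  odd (count (fun x => p x (+) (x == t)) s) = ~~ odd (count p s).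
Proof.
move=> us ts; case/splitPr: ts us => s1 s2.
rewrite cat_uniq /= => /and4P[_ hn tn _].
have tn1 : t \notin s1 by apply/negP=> h; move: hn; rewrite /= h.
have e1 : count (fun x => p x (+) (x == t)) s1 = count p s1.
  apply: eq_in_count => x xs /=; case: eqP => [ex|]; last by rewrite addbF.
  by move: tn1; rewrite -ex xs.
have e2 : count (fun x => p x (+) (x == t)) s2 = count p s2.
  apply: eq_in_count => x xs /=; case: eqP => [ex|]; last by rewrite addbF.
  by move: tn; rewrite -ex xs.
rewrite !count_cat /= e1 e2 eqxx !oddD.
by case: (p t); case: (odd (count p s1)); case: (odd (count p s2)).
Qed.

Lemma count_iota_block (f : nat -> bool) N l a : 0 < a -> l + a <= N ->
  count (fun p => (l < p < l + a) && f p) (iota 1 N.-1) = count f (iota l.+1 a.-1).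
Proof.
move=> ha hla.
have -> : N.-1 = l + (a.-1 + (N - l - a)) by lia.
rewrite iotaD iotaD !count_cat.
rewrite (eq_in_count (a2 := pred0)); last first.
  by move=> p; rewrite mem_iota => hp; apply/negbTE; apply/negP=> /andP[h _]; lia.
rewrite [X in _ + (_ + X)](eq_in_count (a2 := pred0)); last first.
  by move=> p; rewrite mem_iota => hp; apply/negbTE; apply/negP=> /andP[h _]; lia.
rewrite !count_pred0 add0n addn0 add1n; apply: eq_in_count => p; rewrite mem_iota => hp.
by have -> : (l < p < l + a) = true by apply/idP; lia.
Qed.


Section Main.
Variables (n : nat) (d : Order.disp_t) (T : finPOrderType d).
Variables (w : T -> 'I_n) (v : 'I_n -> T) (al : seq nat).
Hypotheses (wK : cancel w v) (vK : cancel v w).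
Hypothesis natw : natural_labeling w.
Hypothesis comp : is_composition n al.

Local Notation ole := (@ole n).
Definition prec : rel 'I_n := fun a c => (v a < v c)%O.
Lemma hprec a c : prec a c -> a < c.
Proof. by move=> h; have h2 : w (v a) < w (v c) := natw h; rewrite !vK in h2. Qed.

Definition Ls (s : 'S_n) := map s (enum 'I_n).
Definition LV (s : 'S_n) := [seq val (s i) | i <- enum 'I_n].
Definition blk s i := take (bl al i) (drop (lo al i) (Ls s)).

Lemma LV_Ls s : LV s = map val (Ls s).
Proof. by rewrite /LV /Ls; elim: (enum 'I_n) => //= x l ->. Qed.
Lemma size_Ls s : size (Ls s) = n.
Proof. by rewrite size_map size_enum_ord. Qed.
Lemma uniq_Ls s : uniq (Ls s).
Proof. by rewrite map_inj_uniq ?enum_uniq //; exact: perm_inj. Qed.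

Lemma size_blk s i : i < size al -> size (blk s i) = bl al i.
Proof. by move=> hi; apply: size_blockv; rewrite size_Ls; exact: (blk_end comp). Qed.

Lemma uniq_blk s i : uniq (blk s i).
Proof. by rewrite /blk take_uniq // drop_uniq // uniq_Ls. Qed.

Lemma T1 s : unimodal al s =
  all (fun i => [exists k : 'I_n.+1, ulistk (map val (blk s i)) k]) (iota 0 (size al)).
Proof.
rewrite /unimodal; apply: eq_in_all => i; rewrite mem_iota add0n => /andP[_ hi].
have h1 := bl_pos comp hi; have h2 := blk_end comp hi.
have h3 : size (LV s) = n by rewrite /LV size_map size_enum_ord.
rewrite /blk map_take map_drop -LV_Ls -uni_block //.
rewrite /blk_hi -/(lo al i.+1) (lo_step hi).
by [].
Qed.

Lemma sinv_index (s : 'S_n) a : val ((s^-1)%g a) = index a (Ls s).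
Proof.
by rewrite -{2}(permKV s a) /Ls index_map ?index_enum_ord //; exact: perm_inj.
Qed.

Lemma T2 s : linext w s = [forall x, forall y, (x < y)%O ==> (index (w x) (Ls s) < index (w y) (Ls s))].
Proof. by rewrite /linext; apply: eq_forallb => x; apply: eq_forallb => y; rewrite !sinv_index. Qed.

Lemma mem_td (j : 'I_n) l a : (j \in take a (drop l (enum 'I_n))) = (l <= j < l + a).
Proof.
rewrite -(mem_map val_inj) map_take map_drop val_enum_ord drop_iota take_iota mem_iota.
case: j => j hj /=; lia.
Qed.

Lemma T3 s i x : i < size al -> (x \in Pblock w al s i) = (w x \in blk s i).
Proof.
move=> hi; rewrite inE /blk /Ls -map_drop -map_take.
apply/existsP/mapP.
- case=> j /andP[hj /eqP e]; exists j => //.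
  rewrite mem_td; move: hj; rewrite /in_block /blk_lo /blk_hi -/(lo al i) -/(lo al i.+1) (lo_step hi); lia.
- case=> j; rewrite mem_td => hj e; exists j; rewrite e eqxx andbT.
  rewrite /in_block /blk_lo /blk_hi -/(lo al i) -/(lo al i.+1) (lo_step hi); lia.
Qed.

Lemma T4 s i x : i < size al ->
  minimal_in (Pblock w al s i) x = mn prec (blk s i) (w x).
Proof.
move=> hi; rewrite /minimal_in /mn T3 //; congr andb.
apply/forallP/allP.
- move=> h c cb; have := h (v c); rewrite T3 // vK cb /= /prec wK //.
- move=> h z; apply/implyP; rewrite T3 // => zb; have := h _ zb; rewrite /prec !wK //.
Qed.

Lemma T5 s : des_out al s =
  count (fun p => (p \notin S_alpha al) && (nth 0 (LV s) p < nth 0 (LV s) p.-1)) (iota 1 n.-1).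
Proof. by rewrite /des_out /Des count_filter. Qed.


Definition oflf (L : seq 'I_n) (j : 'I_n) : 'I_n :=
  if uniq L && (size L == n) then nth j L j else j.
Lemma oflf_inj L : injective (oflf L).
Proof.
move=> j1 j2; rewrite /oflf; case: ifP => [/andP[uL /eqP sL]|_] //.
rewrite (set_nth_default j1 j2); last by rewrite sL.
move/eqP; rewrite nth_uniq ?sL // => /eqP; exact: val_inj.
Qed.
Definition ofl L : 'S_n := perm (@oflf_inj L).

Lemma ofl_Ls s : ofl (Ls s) = s.
Proof.
apply/permP => j; rewrite permE /oflf uniq_Ls size_Ls eqxx /= /Ls.
by rewrite (nth_map j) ?size_enum_ord // nth_ord_enum.
Qed.

Lemma Ls_ofl L : uniq L -> size L = n -> Ls (ofl L) = L.
Proof.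
move=> uL sL; case: L uL sL => [|x0 L'] uL sL.
  by apply/eqP; rewrite -size_eq0 size_Ls -sL.
apply: (@eq_from_nth _ x0); first by rewrite size_Ls sL.
move=> r; rewrite size_Ls => hr.
rewrite /Ls (nth_map x0) ?size_enum_ord // permE /oflf uL sL eqxx /=.
by rewrite (set_nth_default x0) ?sL // nth_enum_ord.
Qed.

Definition mhead (b : seq 'I_n) (x : 'I_n) := head x (sort ole b).
Definition Dpart b x := take (index (mhead b x) b) b.
Definition togX b (t : 'I_n) : pred 'I_n := fun x => (x \in Dpart b t) (+) (x == t).
Definition tog b t := canon (togX b t) (sort ole b).

Lemma idx_take (b : seq 'I_n) k a : a \in take k b -> index a b < k.
Proof.
move=> aD; rewrite -{1}(cat_take_drop k b) index_cat aD.
by apply: (leq_trans (n := size (take k b))); rewrite ?index_mem // size_take_min geq_minl.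
Qed.

Lemma mhead_nth b k t : uniq b -> ulistk (map val b) k ->
  mhead b t = nth t b k /\ index (mhead b t) b = k.
Proof.
move=> ub hu; have hk : k < size b by case/andP: hu => /andP[]; rewrite size_map.
rewrite /mhead (ulist_head t ub hu) /=; split=> //; exact: index_uniq.
Qed.

Lemma nth_mn b k t : uniq b -> ulistk (map val b) k -> mn prec b (nth t b k).
Proof.
move=> ub hu; have hk : k < size b by case/andP: hu => /andP[]; rewrite size_map.
rewrite /mn mem_nth //=; apply/allP=> c cb; apply/negP=> /hprec hc.
have := ulist_min hu (r := index c b); rewrite size_map index_mem cb => /(_ isT).
rewrite !(nth_map t) ?index_mem // nth_index // => h.
by move: (leq_trans hc h); rewrite ltnn.
Qed.

Lemma canon_eq_in (X1 X2 : pred 'I_n) S : {in S, X1 =1 X2} -> canon X1 S = canon X2 S.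
Proof.
move=> h; rewrite /canon (eq_in_filter h); congr (_ ++ _); apply: eq_in_filter => x xS.
by rewrite h.
Qed.

Lemma tog_facts b k t : uniq b -> ulistk (map val b) k -> extb prec b ->
  mn prec b t -> t != mhead b t ->
  [/\ perm_eq (tog b t) b, ulistk (map val (tog b t)) (count (togX b t) (sort ole b)),
      extb prec (tog b t), tog (tog b t) t = b &
      odd (count (togX b t) (sort ole b)) = ~~ odd k].
Proof.
move=> ub hu hext mt tm.
have tb : t \in b by case/andP: mt.
have [hm hidx] := mhead_nth t ub hu.
set m := mhead b t in hm hidx tm.
have hD : Dpart b t = take k b by rewrite /Dpart hidx.
have hS : sort ole b = m :: behead (sort ole b) by rewrite hm; exact: ulist_head.
have uS : uniq (sort ole b) by rewrite sort_uniq.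
have sS : sorted ole (sort ole b) by exact: (sort_sorted (@ole_total n) b).
have mD : m \notin take k b by apply/negP=> /idx_take; rewrite hidx ltnn.
have nXm : ~~ togX b t m by rewrite /togX hD (negbTE mD) /= eq_sym (negbTE tm).
have hU := canon_ulist hS uS sS nXm.
have hP : perm_eq (tog b t) b by rewrite /tog (perm_trans (canon_perm _ _)) // perm_sort.
have hX : forall a, a \in b -> togX b t a -> mn prec b a.
  move=> a ab; rewrite /togX hD; case aD: (a \in take k b) => /=.
    by move=> _; exact: (valley_min hprec ub hu hext aD).
  by move/eqP ->.
have hE : extb prec (tog b t) by exact: (canon_ext hprec ub hX).
have ub' : uniq (tog b t) by rewrite (perm_uniq hP).
split=> //.
-
  set b' := tog b t in hP hU hE ub' *.
  set k' := count (togX b t) (sort ole b) in hU.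
  have hsort : sort ole b' = sort ole b.
    by apply/(perm_sortP (@ole_total n) (@ole_trans n) (@ole_anti n)).
  have [hm' hidx'] := mhead_nth t ub' hU.
  have emh : mhead b' t = m by rewrite /mhead hsort.
  have hD' : Dpart b' t = rev [seq x <- sort ole b | togX b t x].
    rewrite /Dpart hidx' /b' /tog /canon take_size_cat //.
    by rewrite size_rev size_filter.
  rewrite /tog hsort -/(tog b t) -/b'.
  rewrite {2}(canon_form ub hu); apply: canon_eq_in => x xS.
  rewrite /togX hD' mem_rev mem_filter xS andbT /togX hD.
  by rewrite -addbA addbb addbF.
-
  have tS : t \in sort ole b by rewrite mem_sort.
  rewrite /togX count_xor //.
  have hU0 := canon_ulist hS uS sS (X := mem (take k b)) mD.
  rewrite -(canon_form ub hu) in hU0.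
  have e1 := ulist_des hu; have e2 := ulist_des hU0; rewrite e1 in e2.
  by rewrite hD -e2.
Qed.


Lemma index_mid (X : eqType) (p c q : seq X) x : uniq (p ++ c ++ q) -> x \in c ->
  index x (p ++ c ++ q) = size p + index x c.
Proof.
move=> u xc; rewrite index_cat; case: ifP => xp.
  by move: u; rewrite cat_uniq => /and3P[_ /hasP [] ]; exists x => //; rewrite mem_cat xc.
by rewrite index_cat xc.
Qed.

Lemma blk_end' i : i < size al -> lo al i + bl al i <= size (Ls 1).
Proof. by move=> hi; rewrite size_Ls; exact: (blk_end comp). Qed.

Lemma Ls_split s i : Ls s = take (lo al i) (Ls s) ++ blk s i ++ drop (lo al i + bl al i) (Ls s).
Proof. by rewrite -/(splice _ _ _ _) splice_id. Qed.

Lemma blk_ulist s i : unimodal al s -> i < size al -> exists k, ulistk (map val (blk s i)) k.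
Proof.
rewrite T1 => /allP /(_ i); rewrite mem_iota add0n => h hi.
by case/existsP: (h hi) => k hk; exists k.
Qed.

Lemma blk_ext s i : linext w s -> i < size al -> extb prec (blk s i).
Proof.
rewrite T2 => /forallP h hi a c ab cb pac.
have := h (v a) => /forallP /(_ (v c)) /implyP /(_ pac); rewrite !vK.
have u : uniq (take (lo al i) (Ls s) ++ blk s i ++ drop (lo al i + bl al i) (Ls s)).
  by rewrite -Ls_split uniq_Ls.
by rewrite (Ls_split s i) !index_mid // ltn_add2l.
Qed.

Lemma mvblk s i : map val (blk s i) = take (bl al i) (drop (lo al i) (LV s)).
Proof. by rewrite /blk map_take map_drop LV_Ls. Qed.

Lemma size_LV s : size (LV s) = n.
Proof. by rewrite LV_Ls size_map size_Ls. Qed.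

Definition rest s i := count (fun p => ((p \notin S_alpha al) && (nth 0 (LV s) p < nth 0 (LV s) p.-1))
   && ~~ (lo al i < p < lo al i + bl al i)) (iota 1 n.-1).

Definition desc (c : seq nat) := count (fun r => nth 0 c r.+1 < nth 0 c r) (iota 0 (size c).-1).

Lemma Ddec s i : i < size al -> des_out al s = desc (map val (blk s i)) + rest s i.
Proof.
move=> hi; rewrite T5 (count_split _ (fun p => lo al i < p < lo al i + bl al i)); congr (_ + _).
have hb := bl_pos comp hi; have he := blk_end comp hi.
rewrite (eq_in_count (a2 := fun p => (lo al i < p < lo al i + bl al i) &&
   (nth 0 (LV s) p < nth 0 (LV s) p.-1))); last first.
  move=> p _ /=; case q: (lo al i < p < lo al i + bl al i); rewrite ?andbF ?andbT //.
  by rewrite (internal_notS comp hi q).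
rewrite count_iota_block // /desc size_map size_blk //.
rewrite -[(lo al i).+1]addn0 iotaDl count_map; apply: eq_in_count => r.
rewrite mem_iota => /andP[_ hr] /=; rewrite mvblk !nth_blockv ?size_LV; try lia.
by rewrite addSn addnS.
Qed.


Lemma uniq_mn s j : j < size al -> unique_min (Pblock w al s j) ->
  forall a c, mn prec (blk s j) a -> mn prec (blk s j) c -> a = c.
Proof.
move=> hj /existsP[x /andP[_ /forallP h]] a c ha hc.
have := h (v a); rewrite T4 // vK ha => /eqP ea.
have := h (v c); rewrite T4 // vK hc => /eqP ec.
by rewrite -(vK a) -(vK c) ea ec.
Qed.

Lemma k0 b k (t : 'I_n) : uniq b -> ulistk (map val b) k -> extb prec b ->
  (forall a c, mn prec b a -> mn prec b c -> a = c) -> k = 0.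
Proof.
move=> ub hu hext huq; case: (posnP k) => // kpos; exfalso.
have hk : k < size b by case/andP: hu => /andP[]; rewrite size_map.
have a0D : nth t b 0 \in take k b.
  by rewrite -(nth_take t kpos) mem_nth // size_takel // ltnW.
have e := huq _ _ (valley_min hprec ub hu hext a0D) (nth_mn t ub hu).
move/eqP: e; rewrite nth_uniq //; last exact: (ltn_trans kpos).
by rewrite eq_sym (gtn_eqF kpos).
Qed.

Lemma des_zero s : inLalpha w al s ->
  (forall j, j < size al -> unique_min (Pblock w al s j)) -> des_out al s = 0.
Proof.
case/andP=> hlin huni hu; rewrite T5; apply/eqP; rewrite -leqn0 leqNgt -has_count.
apply/hasPn => p; rewrite mem_iota => hpi; apply/negP=> /andP[pS hdesc].
have hp0 : 0 < p < n by move: hpi; lia.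
have [j hj hjp] := find_block comp hp0 pS.
have [k hk] := blk_ulist huni hj.
have pn : p < n by case/andP: hp0.
have k00 := k0 (Ordinal pn) (uniq_blk s j) hk (blk_ext hlin hj) (uniq_mn hj (hu j hj)).
rewrite k00 in hk; case/andP: hk => _; rewrite drop0 => /(sortedP 0) /(_ (p - (lo al j).+1)).
have he := blk_end comp hj.
rewrite size_map size_blk // => /(_ ltac:(lia)).
rewrite mvblk !nth_blockv ?size_LV; try lia.
have -> : lo al j + (p - (lo al j).+1) = p.-1 by lia.
have -> : lo al j + (p - (lo al j).+1).+1 = p by lia.
by move=> /= h; move: hdesc; rewrite ltnNge (ltnW h).
Qed.

Section SpliceS.
Variables (s s' : 'S_n) (i : nat) (b' : seq 'I_n).
Hypothesis hi : i < size al.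
Hypothesis hL : Ls s' = splice (Ls s) (lo al i) (bl al i) b'.
Hypothesis hp : perm_eq b' (blk s i).

Lemma size_b' : size b' = bl al i.
Proof. by rewrite (perm_size hp) size_blk. Qed.

Lemma hle : lo al i + bl al i <= size (Ls s).
Proof. by rewrite size_Ls; exact: (blk_end comp). Qed.

Lemma blk_s'i : blk s' i = b'.
Proof. by rewrite /blk hL (block_splice hle size_b'). Qed.

Lemma disj j : j < size al -> j != i ->
  (lo al j + bl al j <= lo al i) || (lo al i + bl al i <= lo al j).
Proof.
move=> hj nji; case: (ltngtP j i) => hji; last by rewrite hji eqxx in nji.
- by rewrite -(lo_step hj) (lo_mono _ hji).
- by rewrite -(lo_step hi) (lo_mono _ hji) orbT.
Qed.

Lemma rest_eq : rest s' i = rest s i.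
Proof.
rewrite /rest; apply: eq_in_count => p; rewrite mem_iota => hpi /=.
case pS: (p \in S_alpha al) => //=.
case q: (lo al i < p < lo al i + bl al i); rewrite ?andbF ?andbT //.
have hp0 : 0 < p < n by move: hpi; lia.
have [j hj hjp] := find_block comp hp0 (negbT pS).
have nji : j != i by apply/eqP => e; move: q; rewrite -e hjp.
have hLV : LV s' = splice (LV s) (lo al i) (bl al i) (map val b') by rewrite !LV_Ls hL map_splice.
have hle2 : lo al i + bl al i <= size (LV s) by rewrite size_LV; exact: (blk_end comp hi).
have hb2 : size (map val b') = bl al i by rewrite size_map size_b'.
have dj := disj hj nji.
rewrite hLV !(nth_splice_out hle2 hb2) //; move: dj hjp; lia.
Qed.

Lemma blk_s'j j : j < size al -> j != i -> blk s' j = blk s j.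
Proof.
move=> hj nji.
have n0 : 0 < n by apply: (leq_trans (bl_pos comp hi)); apply: (leq_trans _ (blk_end comp hi)); rewrite leq_addl.
rewrite /blk hL (splice_other hle size_b' (Ordinal n0)) //.
  by rewrite size_Ls; exact: (blk_end comp hj).
case: (ltngtP j i) => hji; last by rewrite hji eqxx in nji.
- by rewrite -(lo_step hj) (lo_mono _ hji).
- by rewrite -(lo_step hi) (lo_mono _ hji) orbT.
Qed.

Lemma Pblock_eq j : j < size al -> Pblock w al s' j = Pblock w al s j.
Proof.
move=> hj; apply/setP=> x; rewrite !T3 //.
case: (eqVneq j i) => [->|nji]; first by rewrite blk_s'i (perm_mem hp).
by rewrite blk_s'j.
Qed.

Lemma inL_splice k' : inLalpha w al s -> ulistk (map val b') k' -> extb prec b' ->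
  inLalpha w al s'.
Proof.
case/andP=> hlin huni hu' he'; apply/andP; split.
- rewrite T2; apply/forallP=> x; apply/forallP=> y; apply/implyP=> xy.
  move: hlin; rewrite T2 => /forallP /(_ x) /forallP /(_ y) /implyP /(_ xy).
  move=> h; rewrite (Ls_split s i) in h; rewrite hL /splice.
  apply: index_swap h.
  + by move=> z; rewrite (perm_mem hp).
  + by rewrite size_b' size_blk.
  + move=> xb yb; apply: he'; rewrite ?(perm_mem hp) //.
    by rewrite /prec !wK.
- rewrite T1; apply/allP=> j; rewrite mem_iota add0n => hj; apply/existsP.
  case: (eqVneq j i) => [->|nji].
    exists (inord k'); rewrite blk_s'i inordK //.
    case/andP: hu' => /andP[+ _] _; rewrite size_map size_b' => h.
    by have := blk_end comp hi; lia.
  have [k hk] := blk_ulist huni hj.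
  exists (inord k); rewrite blk_s'j // inordK //.
  case/andP: hk => /andP[+ _] _; rewrite size_map size_blk // => h.
  by have := blk_end comp hj; lia.
Qed.

End SpliceS.


Definition ibad s := find (fun i => ~~ unique_min (Pblock w al s i)) (iota 0 (size al)).
Definition tpick s i := [pick y | minimal_in (Pblock w al s i) y && (w y != mhead (blk s i) (w y))].
Definition newL s :=
  if inLalpha w al s && (ibad s < size al) then
    if tpick s (ibad s) is Some y then
      splice (Ls s) (lo al (ibad s)) (bl al (ibad s)) (tog (blk s (ibad s)) (w y))
    else Ls s
  else Ls s.
Definition phi s := ofl (newL s).

Lemma ibad_Q s : inLstar w al s -> ibad s = size al.
Proof.
case/andP=> _ ha.
have h : ~~ has (fun i => ~~ unique_min (Pblock w al s i)) (iota 0 (size al)).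
  by apply/hasPn=> i hi /=; rewrite negbK; move/allP: ha; apply.
move: h; rewrite has_find size_iota -leqNgt => h.
apply/eqP; rewrite eqn_leq h andbT.
by have := find_size (fun i => ~~ unique_min (Pblock w al s i)) (iota 0 (size al)); rewrite size_iota.
Qed.

Lemma ibad_nQ s : inLalpha w al s -> ~~ inLstar w al s ->
  ibad s < size al /\ ~~ unique_min (Pblock w al s (ibad s)).
Proof.
move=> hP; rewrite /inLstar hP /= => hna.
have hh : has (fun i => ~~ unique_min (Pblock w al s i)) (iota 0 (size al)).
  by rewrite has_predC.
have hf := hh; rewrite has_find size_iota in hf; split=> //.
have := nth_find 0 hh; rewrite nth_iota //.
Qed.

Lemma phi_Q s : inLstar w al s -> phi s = s.
Proof. by move=> hQ; rewrite /phi /newL ibad_Q // ltnn andbF ofl_Ls. Qed.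

Lemma phi_nP s : ~~ inLalpha w al s -> phi s = s.
Proof. by move=> hP; rewrite /phi /newL (negbTE hP) ofl_Ls. Qed.

Lemma mhead_perm b1 b2 x : perm_eq b1 b2 -> mhead b1 x = mhead b2 x.
Proof.
by move=> hp; rewrite /mhead; congr head; apply/(perm_sortP (@ole_total n) (@ole_trans n) (@ole_anti n)).
Qed.

Lemma tpick_some s i : inLalpha w al s -> i < size al -> ~~ unique_min (Pblock w al s i) ->
  exists y, tpick s i = Some y.
Proof.
case/andP=> hlin huni hi hnu; rewrite /tpick; case: pickP => [y _|none]; first by exists y.
exfalso; have [k hk] := blk_ulist huni hi.
have hk' : k < size (blk s i) by case/andP: hk => /andP[]; rewrite size_map.
have n0 : 0 < n by move: hk'; rewrite size_blk //; have := blk_end comp hi; lia.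
set t := Ordinal n0.
set m0 := nth t (blk s i) k.
have hm0 : minimal_in (Pblock w al s i) (v m0) by rewrite T4 // vK; exact: nth_mn (uniq_blk s i) hk.
move: hnu; rewrite /unique_min => /existsPn /(_ (v m0)); rewrite hm0 /=.
move=> /forallPn [y]; rewrite negb_imply => /andP[hy nym].
have := none y; rewrite hy /=.
have [hmh _] := mhead_nth (w y) (uniq_blk s i) hk.
rewrite hmh (set_nth_default t) // => /negbFE /eqP e.
by move: nym; rewrite /m0 -e wK eqxx.
Qed.

Lemma tog_case s : inLalpha w al s -> ~~ inLstar w al s ->
  exists y k, let i := ibad s in
   [/\ i < size al, tpick s i = Some y, ulistk (map val (blk s i)) k,
       mn prec (blk s i) (w y) && (w y != mhead (blk s i) (w y)) &
       Ls (phi s) = splice (Ls s) (lo al i) (bl al i) (tog (blk s i) (w y))].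
Proof.
move=> hP hnQ; have [hi hnu] := ibad_nQ hP hnQ.
have [y hy] := tpick_some hP hi hnu.
have [k hk] := blk_ulist (andP hP).2 hi.
exists y, k; move: (hy); rewrite /tpick; case: pickP => [y' /andP[hmin hne] [e]|]; last by [].
rewrite e in hmin hne; rewrite -T4 // hmin hne; split=> //; first by rewrite e.
have hmn : mn prec (blk s (ibad s)) (w y) by rewrite -T4.
have [hperm _ _ _ _] := tog_facts (uniq_blk s (ibad s)) hk (blk_ext (andP hP).1 hi) hmn hne.
rewrite /phi /newL hP hi hy /= Ls_ofl //.
  by rewrite (perm_uniq (perm_splice _)) ?uniq_Ls.
have h1 : lo al (ibad s) + bl al (ibad s) <= size (Ls s) by rewrite size_Ls; exact: (blk_end comp hi).
have h2 : size (tog (blk s (ibad s)) (w y)) = bl al (ibad s) by rewrite (perm_size hperm) size_blk.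
by rewrite (size_splice h1 h2) size_Ls.
Qed.


Lemma phi_P s : inLalpha w al s -> inLalpha w al (phi s).
Proof.
move=> hP; case hQ: (inLstar w al s); first by rewrite phi_Q.
have [y [k [hi hy hk /andP[hmn hne] hL]]] := tog_case hP (negbT hQ).
have [hperm hU' hE' _ _] := tog_facts (uniq_blk s (ibad s)) hk (blk_ext (andP hP).1 hi) hmn hne.
exact: (inL_splice hi hL hperm hP hU' hE').
Qed.

Lemma phi_sign s : inLalpha w al s -> ~~ inLstar w al s ->
  odd (des_out al (phi s)) = ~~ odd (des_out al s).
Proof.
move=> hP hnQ.
have [y [k [hi hy hk /andP[hmn hne] hL]]] := tog_case hP hnQ.
have [hperm hU' hE' _ hpar] := tog_facts (uniq_blk s (ibad s)) hk (blk_ext (andP hP).1 hi) hmn hne.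
rewrite (Ddec (phi s) hi) (Ddec s hi) (rest_eq hi hL hperm) (blk_s'i hi hL hperm).
rewrite /desc (ulist_des hk) (ulist_des hU') !oddD hpar.
by case: (odd k); case: (odd (rest s (ibad s))).
Qed.

Lemma phi_inv s : phi (phi s) = s.
Proof.
case hP: (inLalpha w al s); last by rewrite !phi_nP ?hP.
case hQ: (inLstar w al s); first by rewrite !phi_Q.
have [y [k [hi hy hk /andP[hmn hne] hL]]] := tog_case hP (negbT hQ).
have [hperm hU' hE' hinv _] := tog_facts (uniq_blk s (ibad s)) hk (blk_ext (andP hP).1 hi) hmn hne.
set s' := phi s in hL *.
have hP' : inLalpha w al s' by exact: phi_P.
have hib : ibad s' = ibad s.
  apply: eq_in_find => j; rewrite mem_iota add0n => /andP[_ hj].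
  by rewrite (Pblock_eq hi hL hperm hj).
have htp : tpick s' (ibad s) = tpick s (ibad s).
  apply: eq_pick => y0; rewrite (Pblock_eq hi hL hperm hi) (blk_s'i hi hL hperm).
  by rewrite (mhead_perm _ hperm).
rewrite /phi /newL hP' hib hi htp hy /= -/s' hL (blk_s'i hi hL hperm) hinv.
have h1 : lo al (ibad s) + bl al (ibad s) <= size (Ls s) by rewrite size_Ls; exact: (blk_end comp hi).
by rewrite (splice_splice _ h1 (size_b' hi hperm)) splice_id ofl_Ls.
Qed.

End Main.

Import GRing.Theory.


Theorem theorem2p8 (d : Order.disp_t) (T : finPOrderType d) (n : nat)
    (w : T -> 'I_n) (al : seq nat) :
  bijective w -> natural_labeling w -> is_composition n al ->
  (\sum_(s : 'S_n | inLalpha w al s) (-1) ^+ (des_out al s) : int)%R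
    = Posz #|[set s : 'S_n | inLstar w al s]|.
Proof.
case=> v wK vK natw comp.
set g := phi w al.
have ginv : forall s, g (g s) = s by move=> s; exact: (phi_inv wK vK natw comp).
have gP : forall s, inLalpha w al s -> inLalpha w al (g s) by move=> s; exact: (phi_P wK vK natw comp).
have gQ : forall s, inLstar w al s -> g s = s by move=> s; exact: phi_Q.
have gS : forall s, inLalpha w al s -> ~~ inLstar w al s ->
  odd (des_out al (g s)) = ~~ odd (des_out al s) by move=> s; exact: (phi_sign wK vK natw comp).
have QP : forall s, inLstar w al s -> inLalpha w al s by move=> s /andP[].
have Q0 : forall s, inLstar w al s -> des_out al s = 0.
  move=> s /andP[hP ha]; apply: (des_zero wK vK natw comp hP) => j hj.
  by move/allP: ha; apply; rewrite mem_iota.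
have hnot : forall s, inLalpha w al s && ~~ inLstar w al s ->
    inLalpha w al (g s) && ~~ inLstar w al (g s).
  move=> s /andP[hP hnQ]; rewrite gP //=; apply/negP=> hQ'.
  have e : g s = s by rewrite -{2}(ginv s) (gQ _ hQ').
  by move: (gS s hP hnQ); rewrite e; case: (odd (des_out al s)).
rewrite (bigID (fun s => inLstar w al s)) /=.
have -> : (\sum_(s | inLalpha w al s && ~~ inLstar w al s) (-1) ^+ des_out al s : int)%R = 0%R.
  set X := (\sum_(s | _) _)%R.
  have hX : X = (- X)%R.
    rewrite {1}/X (reindex_inj (can_inj ginv)) /= -sumrN.
    apply: eq_big => s.
      apply/idP/idP => h; first by rewrite -[s]ginv; exact: hnot.
      exact: hnot.
    move=> /hnot; rewrite ginv => /andP[hP hnQ].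
    rewrite -signr_odd (gS _ hP hnQ) -[X in _ = (- X)%R]signr_odd.
    by case: (odd (des_out al s)); rewrite ?expr0 ?expr1 ?opprK.
  by move: hX; lia.
rewrite addr0 (eq_bigr (fun _ => 1%R)); last first.
  by move=> s /andP[_ hQ]; rewrite Q0.
rewrite (eq_bigl (fun s => s \in [set s | inLstar w al s])); last first.
  by move=> s; rewrite inE; case hQ: (inLstar w al s); rewrite ?andbT ?andbF ?QP.
by rewrite sumr_const natz.
Qed.
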